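(* Let $F$ be a field of characteristic zero and let $n,m$ be natural numbers, and let $r\le n$, $s\le m$ be natural numbers. Then each of the Lie algebras $W(n,m)$, $W(n,m,r,s)$ and $W^*(n,m)$ (defined in the context) is a simple Lie algebra.
   Context: Let $A_{n,m}$ be the commutative $F$-algebra with $F$-basis the symbols $e^{\alpha}x^{\beta}=e^{a_1x_1}\cdots e^{a_nx_n}x_1^{b_1}\cdots x_{n+m}^{b_{n+m}}$, $\alpha=(a_1,\dots,a_n)\in\mathbb Z^n$, $\beta=(b_1,\dots,b_{n+m})\in\mathbb Z^{n+m}$, with multiplication $e^{\alpha}x^{\beta}\cdot e^{\gamma}x^{\delta}=e^{\alpha+\gamma}x^{\beta+\delta}$. For $1\le i\le n+m$ let $\partial_i$ be the derivation of $A_{n,m}$ with $\partial_i(e^{\alpha}x^{\beta})=a_i e^{\alpha}x^{\beta}+b_i e^{\alpha}x^{\beta-\epsilon_i}$, where $a_i:=0$ for $i>n$ and $\epsilon_i$ is the $i$-th unit vector. $W(n,m)$ is the Lie algebra with basis $\{e^{\alpha}x^{\beta}\partial_i:\alpha\in\mathbb Z^n,\beta\in\mathbb Z^{n+m},1\le i\le n+m\}$ and bracket $[f\partial_i,g\partial_j]=f\,\partial_i(g)\,\partial_j-g\,\partial_j(f)\,\partial_i$ for $f,g\in A_{n,m}$. $W^*(n,m)$ is the subalgebra spanned by the basis elements $e^{\alpha}x^{\beta}\partial_i$ with $\beta\in\mathbb N^{n+m}$ ($\mathbb N$ the nonnegative integers). $W(n,m,r,s)$ is the subalgebra spanned by the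 basis elements $e^{\alpha}x^{\beta}\partial_k$ ($\alpha\in\mathbb Z^n$, $1\le k\le n+m$) such that $b_1,\dots,b_r\in\mathbb Z$, $b_{r+1},\dots,b_n\in\mathbb N$, $b_{n+1},\dots,b_{n+s}\in\mathbb Z$, $b_{n+s+1},\dots,b_{n+m}\in\mathbb N$. *)

(* Defs.v *)
From HB Require Import structures.
From mathcomp Require Import all_boot all_order all_algebra.
From mathcomp Require Import finmap.
From mathcomp.multinomials Require Import monalg.

Set Implicit Arguments.
Unset Strict Implicit.
Unset Printing Implicit Defensive.

Import GRing.Theory.
Local Open Scope ring_scope.

(* Index set of the standard basis e^alpha x^beta \partial_i of W(n,m).
   alpha : Z^n, beta : Z^(n+m), i : {0,..,n+m-1} (0-based). *)
Definition Widx (n m : nat) : Type :=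
  ({ffun 'I_n -> int} * {ffun 'I_(n + m) -> int} * 'I_(n + m))%type.

Definition Walg (F : fieldType) (n m : nat) := {malg F[Widx n m]}.

(* a_i for i : 'I_(n+m), with a_i := 0 when i >= n *)
Definition acoef (n m : nat) (alpha : {ffun 'I_n -> int}) (i : 'I_(n + m)) : int :=
  if @insub nat (fun k => (k < n)%N) _ (val i) is Some k then alpha k else 0.

Definition addv (k : nat) (u v : {ffun 'I_k -> int}) : {ffun 'I_k -> int} :=
  [ffun t => u t + v t].

Definition subeps (k : nat) (v : {ffun 'I_k -> int}) (i : 'I_k) : {ffun 'I_k -> int} :=
  [ffun t => v t - (t == i)%:Z].

Definition Wbasis (F : fieldType) (n m : nat) (alpha : {ffun 'I_n -> int})
  (beta : {ffun 'I_(n + m) -> int}) (i : 'I_(n + m)) : Walg F n m :=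
  << (alpha, beta, i) >>.

(* [e^a x^b d_i, e^c x^d d_j]
   = e^a x^b d_i(e^c x^d) d_j - e^c x^d d_j(e^a x^b) d_i, with
   d_i(e^c x^d) = c_i e^c x^d + d_i e^c x^(d - eps_i). *)
Definition Wbr_basis (F : fieldType) (n m : nat) (p q : Widx n m) : Walg F n m :=
  let: (alpha, beta, i) := p in
  let: (gamma, delta, j) := q in
  let ag := addv alpha gamma in
  let bd := addv beta delta in
    (acoef gamma i)%:~R *: Wbasis F ag bd j
  + (delta i)%:~R *: Wbasis F ag (subeps bd i) j
  - (acoef alpha j)%:~R *: Wbasis F ag bd i
  - (beta j)%:~R *: Wbasis F ag (subeps bd j) i.

Definition Wbr (F : fieldType) (n m : nat) (f g : Walg F n m) : Walg F n m :=
  \sum_(p <- enum_fset (msupp f)) \sum_(q <- enum_fset (msupp g))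
     (f@_p * g@_q) *: Wbr_basis F p q.

Definition Wsub (F : fieldType) (n m : nat) (P : pred (Widx n m)) (f : Walg F n m) : Prop :=
  forall p, p \in msupp f -> P p.

Definition Pfull (n m : nat) : pred (Widx n m) := fun _ => true.

(* W^*(n,m): beta in N^(n+m) *)
Definition Pstar (n m : nat) : pred (Widx n m) :=
  fun p => [forall k, 0 <= p.1.2 k].

(* W(n,m,r,s): b_1..b_r in Z, b_(r+1)..b_n in N, b_(n+1)..b_(n+s) in Z,
   b_(n+s+1)..b_(n+m) in N.  In 0-based indices: b_k >= 0 whenever
   r <= k < n or n + s <= k. *)
Definition Prs (n m r s : nat) : pred (Widx n m) :=
  fun p => [forall k : 'I_(n + m),
              ((r <= k < n)%N || (n + s <= k)%N) ==> (0 <= p.1.2 k)].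

Definition Wideal (F : fieldType) (n m : nat) (P : pred (Widx n m))
  (J : Walg F n m -> Prop) : Prop :=
  [/\ (forall x, J x -> Wsub P x),
      J 0,
      (forall x y, J x -> J y -> J (x + y)),
      (forall (c : F) x, J x -> J (c *: x)) &
      (forall x y, Wsub P x -> J y -> J (Wbr x y))].

Definition Wsimple (F : fieldType) (n m : nat) (P : pred (Widx n m)) : Prop :=
  [/\ (forall x y : Walg F n m, Wsub P x -> Wsub P y -> Wsub P (Wbr x y)),
      (exists x y : Walg F n m, [/\ Wsub P x, Wsub P y & Wbr x y != 0]) &
      (forall J : Walg F n m -> Prop, Wideal P J ->
         (forall x, J x <-> x = 0) \/ (forall x, J x <-> Wsub P x))].

(* Main.v *)
Require Import Defs.
From HB Require Import structures.
From mathcomp Require Import all_boot all_order all_algebra.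
From mathcomp Require Import finmap.
From mathcomp.multinomials Require Import monalg.
From mathcomp Require Import ring zify.
From Stdlib Require Import Classical.
Import Defs.

Set Implicit Arguments.
Unset Strict Implicit.
Unset Printing Implicit Defensive.
Import GRing.Theory Order.TTheory.
Local Open Scope ring_scope.


Lemma mulr_natb (F : ringType) (c : F) (b : bool) : c * (1 *+ b) = if b then c else 0.
Proof. by case: b; rewrite ?mulr1 ?mulr0. Qed.

Section Basics.
Variables (F : fieldType) (n m : nat).
Local Notation W := (Walg F n m).
Local Notation I := (Widx n m).

Definition bas (p : I) : W := locked (<<p>> : W).
Lemma basE (p : I) : bas p = <<p>>. Proof. by rewrite /bas -lock. Qed.
Lemma coef_bas (p P : I) : (bas p)@_P = (p == P)%:R.
Proof. by rewrite basE mcoeffU. Qed.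
Lemma WbasE a b i : Wbasis F a b i = bas (a, b, i).
Proof. by rewrite basE. Qed.
Lemma mcoeffZW (c : F) (g : W) (P : I) : (c *: g)@_P = c * g@_P.
Proof. exact: mcoeffZ. Qed.
Lemma msupp_bas p : msupp (bas p) = [fset p]%fset.
Proof. by rewrite basE msuppU oner_eq0. Qed.

Lemma Wbr_U (p : I) (x : W) :
  Wbr (bas p) x = \sum_(q <- enum_fset (msupp x)) x@_q *: Wbr_basis F p q.
Proof.
rewrite /Wbr msupp_bas big_seq_fset1.
by apply: eq_bigr => q _; rewrite coef_bas eqxx mul1r.
Qed.

Lemma Wbr_UU (p q : I) : Wbr (bas p) (bas q) = Wbr_basis F p q.
Proof.
by rewrite Wbr_U msupp_bas big_seq_fset1 coef_bas eqxx scale1r.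
Qed.

Lemma Wbr_basisE a b i g d k : Wbr_basis F (a, b, i) (g, d, k) =
  (acoef g i)%:~R *: bas (addv a g, addv b d, k)
  + (d i)%:~R *: bas (addv a g, subeps (addv b d) i, k)
  - (acoef a k)%:~R *: bas (addv a g, addv b d, i)
  - (b k)%:~R *: bas (addv a g, subeps (addv b d) k, i).
Proof. by rewrite /Wbr_basis !WbasE. Qed.

Lemma coef4 (c1 c2 c3 c4 : F) (p1 p2 p3 p4 P : I) :
 (c1 *: bas p1 + c2 *: bas p2 - c3 *: bas p3 - c4 *: bas p4)@_P
 = (if p1 == P then c1 else 0) + (if p2 == P then c2 else 0)
   - (if p3 == P then c3 else 0) - (if p4 == P then c4 else 0).
Proof.
rewrite mcoeffB mcoeffB mcoeffD.
repeat erewrite mcoeffZW; repeat erewrite coef_bas.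
by rewrite -!mulr_natb.
Qed.

Lemma mcoeff_sum (P : I) (s : seq I) (f : I -> W) :
  (\sum_(q <- s) f q)@_P = \sum_(q <- s) (f q)@_P.
Proof. by elim: s => [|a s IH]; rewrite ?big_nil ?mcoeff0 // !big_cons mcoeffD IH. Qed.

Lemma sum_pick (x : W) (G : I -> F) (phi : pred I) (a : I) :
  (forall q, q \in msupp x -> phi q = (q == a)) ->
  \sum_(q <- enum_fset (msupp x)) (if phi q then x@_q * G q else 0) = x@_a * G a.
Proof.
move=> H.
have -> : \sum_(q <- enum_fset (msupp x)) (if phi q then x@_q * G q else 0)
        = \sum_(q <- enum_fset (msupp x)) (if q == a then x@_q * G q else 0).
  by apply: eq_big_seq => q qs; rewrite H.
case: (boolP (a \in msupp x)) => ha.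
  rewrite (bigD1_seq a) ?fset_uniq //= eqxx big1 ?addr0 // => q /negbTE -> //.
rewrite big1_seq ?(mcoeff_outdom ha) ?mul0r // => q /andP [_ qs].
by case: eqP qs ha => // -> ->.
Qed.


Lemma sum_pick1 (x : W) (G : I -> F) (a : I) :
  \sum_(q <- enum_fset (msupp x)) (if q == a then x@_q * G q else 0) = x@_a * G a.
Proof. exact: (@sum_pick x G (pred1 a)). Qed.

Local Notation N := (n + m)%N.
Definition e0n : {ffun 'I_n -> int} := [ffun _ => 0].
Definition e0 : {ffun 'I_N -> int} := [ffun _ => 0].
Definition ev (j : 'I_N) (t : int) : {ffun 'I_N -> int} := [ffun i => (i == j)%:Z * t].
Definition shv (j : 'I_N) (t : int) (v : {ffun 'I_N -> int}) : {ffun 'I_N -> int} :=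
  [ffun i => v i + (i == j)%:Z * t].
Definition sh (j : 'I_N) (t : int) (P : I) : I := (P.1.1, shv j t P.1.2, P.2).
Definition deg (j : 'I_N) (P : I) : int := P.1.2 j.
Definition sec (j : 'I_N) (P : I) : int := acoef P.1.1 j.

Lemma addv0 (v : {ffun 'I_N -> int}) : addv e0 v = v.
Proof. by apply/ffunP => i; rewrite !ffunE add0r. Qed.
Lemma addv0n (v : {ffun 'I_n -> int}) : addv e0n v = v.
Proof. by apply/ffunP => i; rewrite !ffunE add0r. Qed.
Lemma addvev j t (v : {ffun 'I_N -> int}) : addv (ev j t) v = shv j t v.
Proof. by apply/ffunP => i; rewrite !ffunE addrC. Qed.
Lemma subepsE (v : {ffun 'I_N -> int}) j : subeps v j = shv j (-1) v.
Proof. by apply/ffunP => i; rewrite !ffunE mulrN1. Qed.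
Lemma shv_comp j a b v : shv j a (shv j b v) = shv j (b + a) v.
Proof. by apply/ffunP => i; rewrite !ffunE mulrDr addrA. Qed.
Lemma shv0 j v : shv j 0 v = v.
Proof. by apply/ffunP => i; rewrite !ffunE mulr0 addr0. Qed.
Lemma sh_comp j a b P : sh j a (sh j b P) = sh j (b + a) P.
Proof. by rewrite /sh /= shv_comp. Qed.
Lemma sh0 j P : sh j 0 P = P.
Proof. by case: P => [[a b] k]; rewrite /sh /= shv0. Qed.
Lemma sh_eq j a q P : (sh j a q == P) = (q == sh j (- a) P).
Proof.
apply/eqP/eqP => [<-|->]; rewrite sh_comp ?subrr ?addrN ?sh0 //.
by rewrite addNr sh0.
Qed.
Lemma deg_sh i j t P : deg i (sh j t P) = deg i P + (i == j)%:Z * t.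
Proof. by rewrite /deg /sh /= ffunE. Qed.
Lemma deg_shj j t P : deg j (sh j t P) = deg j P + t.
Proof. by rewrite deg_sh eqxx mul1r. Qed.
Lemma deg_shi i j t P : i != j -> deg i (sh j t P) = deg i P.
Proof. by move=> /negbTE h; rewrite deg_sh h mul0r addr0. Qed.
Lemma sec_sh i j t P : sec i (sh j t P) = sec i P.
Proof. by []. Qed.
Lemma acoef0 (i : 'I_N) : acoef e0n i = 0.
Proof. by rewrite /acoef; case: insub => // k; rewrite ffunE. Qed.
Lemma e0E i : e0 i = 0.
Proof. by rewrite ffunE. Qed.


Definition Dop (j : 'I_N) (x : W) : W := Wbr (bas (e0n, e0, j)) x.
Definition Xop (j : 'I_N) (t : int) (x : W) : W := Wbr (bas (e0n, ev j t, j)) x.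

Lemma coef_D j x P :
  (Dop j x)@_P = (sec j P)%:~R * x@_P + (deg j P + 1)%:~R * x@_(sh j 1 P).
Proof.
rewrite /Dop Wbr_U mcoeff_sum.
transitivity (\sum_(q <- enum_fset (msupp x))
   ((if q == P then x@_q * (sec j q)%:~R else 0) +
    (if q == sh j 1 P then x@_q * (deg j q)%:~R else 0))).
  apply: eq_bigr => -[[g d] k] _.
  rewrite Wbr_basisE; erewrite mcoeffZW; rewrite coef4.
  rewrite !addv0 !addv0n acoef0 e0E subepsE.
  change (g, shv j (-1) d, k) with (sh j (-1) (g, d, k)).
  rewrite sh_eq opprK mulr0z !if_same !subr0 mulrDr.
  by congr (_ + _); case: ifP => _; rewrite ?mulr0.
by rewrite big_split /= !sum_pick1 deg_shj !(mulrC (x@__)).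
Qed.
Lemma coef_X j t x P :
  (Xop j t x)@_P = (sec j P)%:~R * x@_(sh j (- t) P)
     + (deg j P + (1 - t) - (P.2 == j)%:Z * t)%:~R * x@_(sh j (1 - t) P).
Proof.
rewrite /Xop Wbr_U mcoeff_sum.
transitivity (\sum_(q <- enum_fset (msupp x))
   ((if q == sh j (- t) P then x@_q * (sec j q)%:~R else 0) +
    (if q == sh j (1 - t) P then x@_q * (deg j q - (q.2 == j)%:Z * t)%:~R else 0))).
  apply: eq_bigr => -[[g d] k] _.
  rewrite Wbr_basisE; erewrite mcoeffZW; rewrite coef4.
  have E : - (t + -1) = 1 - t by ring.
  case: (eqVneq k j) => [->|kj].
    rewrite !addv0n addvev acoef0 mulr0z if_same subr0 !subepsE shv_comp.
    change (g, shv j t d, j) with (sh j t (g, d, j)).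
    change (g, shv j (t + -1) d, j) with (sh j (t + -1) (g, d, j)).
    rewrite ffunE eqxx mul1r !sh_eq E /deg /sec /=.
    by case: ifP => _; case: ifP => _; rewrite ?eqxx /=; ring.
  rewrite !addv0n addvev acoef0 mulr0z if_same subr0 !subepsE shv_comp.
  change (g, shv j t d, k) with (sh j t (g, d, k)).
  change (g, shv j (t + -1) d, k) with (sh j (t + -1) (g, d, k)).
  rewrite ffunE (negbTE kj) mul0r mulr0z if_same subr0 !sh_eq E /deg /sec /=.
  by case: ifP => _; case: ifP => _; rewrite ?(negbTE kj) /=; ring.
rewrite big_split /= !sum_pick1 deg_shj !(mulrC (x@__)).
by rewrite /sec /=.
Qed.

End Basics.

Section Clean.
Variables (F : fieldType) (n m : nat).
Hypothesis charF0 : [pchar F]%R =i pred0.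
Local Notation W := (Walg F n m).
Local Notation I := (Widx n m).
Local Notation N := (n + m)%N.
Local Notation sh := (@sh n m).
Local Notation deg := (@deg n m).
Local Notation sec := (@sec n m).

Definition Tc (j : 'I_N) (c : int) (x : W) : W := Dop j x - c%:~R *: x.

Lemma coef_T j c x P :
  (Tc j c x)@_P = (sec j P - c)%:~R * x@_P + (deg j P + 1)%:~R * x@_(sh j 1 P).
Proof. rewrite /Tc mcoeffB coef_D mcoeffZW intrB; ring. Qed.

Lemma intr_neq0 (z : int) : z != 0 -> (z%:~R : F) != 0.
Proof.
have H := (pcharf0P F).1 charF0.
case: z => k hk; first by rewrite /= H; apply: contra hk => /eqP ->.
by rewrite NegzE mulrNz oppr_eq0 H.
Qed.

Definition Sup (Q : I -> Prop) (x : W) := forall P, x@_P != 0 -> Q P.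

Lemma Sup_T (Q : I -> Prop) j c x :
  (forall P, Q (sh j 1 P) -> Q P) -> Sup Q x -> Sup Q (Tc j c x).
Proof.
move=> HQ Hx P; rewrite coef_T.
case: (eqVneq x@_P 0) => [h|h]; last by move=> _; exact: Hx.
case: (eqVneq x@_(sh j 1 P) 0) => [h2|h2]; last by move=> _; apply: HQ; exact: Hx.
by rewrite h h2 !mulr0 addr0 eqxx.
Qed.

Lemma Sup_T0 j c x : Sup (fun P => 0 <= deg j P) x -> Sup (fun P => 0 <= deg j P) (Tc j c x).
Proof.
move=> Hx P; rewrite coef_T.
case: (leP 0 (deg j P)) => // hneg.
case: (eqVneq x@_P 0) => [h|h]; last by move/Hx: h; rewrite leNgt hneg.
rewrite h mulr0 add0r.
case: (eqVneq x@_(sh j 1 P) 0) => [h2|h2]; first by rewrite h2 mulr0 eqxx.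
move/Hx: h2; rewrite deg_shj => h3.
have -> : deg j P + 1 = 0 by lia.
by rewrite mul0r eqxx.
Qed.

Lemma Sup_iter (Q : I -> Prop) (f : W -> W) k x :
  (forall y, Sup Q y -> Sup Q (f y)) -> Sup Q x -> Sup Q (iter k f x).
Proof. by move=> Hf Hx; elim: k => //= k IH; apply: Hf. Qed.

Lemma Sup_and (Q1 Q2 : I -> Prop) x : Sup Q1 x -> Sup Q2 x -> Sup (fun P => Q1 P /\ Q2 P) x.
Proof. by move=> h1 h2 P hP; split; [apply: h1|apply: h2]. Qed.

Lemma Sup_impl (Q1 Q2 : I -> Prop) x : (forall P, Q1 P -> Q2 P) -> Sup Q1 x -> Sup Q2 x.
Proof. by move=> h h1 P /h1; apply: h. Qed.

Lemma Sup_deg_le j c (d : int) x : Sup (fun P => deg j P <= d) x -> Sup (fun P => deg j P <= d) (Tc j c x).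
Proof.
apply: Sup_T => P; rewrite deg_shj => h; lia.
Qed.

Lemma kill j c (d : int) x : Sup (fun P => deg j P <= d) x ->
  forall k P, sec j P = c -> d < deg j P + k%:Z -> (iter k (Tc j c) x)@_P = 0.
Proof.
move=> Hx; elim=> [|k IH] P hs hd /=.
  by case: (eqVneq x@_P 0) => // /Hx h; lia.
rewrite coef_T hs subrr mul0r add0r (IH (sh j 1 P)) ?mulr0 //.
rewrite deg_shj; lia.
Qed.

Lemma top j c (d : int) x : Sup (fun P => deg j P <= d) x ->
  forall k P, deg j P = d -> (iter k (Tc j c) x)@_P = ((sec j P - c)%:~R)^+k * x@_P.
Proof.
move=> Hx; elim=> [|k IH] P hd /=; first by rewrite expr0 mul1r.
rewrite coef_T (IH P hd).
have -> : (iter k (Tc j c) x)@_(sh j 1 P) = 0.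
  case: (eqVneq (iter k (Tc j c) x)@_(sh j 1 P) 0) => // h.
  have := Sup_iter (k := k) (@Sup_deg_le j c d) Hx h.
  rewrite deg_shj hd; lia.
by rewrite mulr0 addr0 exprS mulrA.
Qed.

Lemma lower j c y : forall k P, sec j P = c -> 0 <= deg j P ->
  exists2 e : F, e != 0 & (iter k (Tc j c) y)@_P = e * y@_(sh j k%:Z P).
Proof.
elim=> [|k IH] P hs hd /=; first by exists 1; rewrite ?oner_eq0 // mul1r sh0.
rewrite coef_T hs subrr mul0r add0r.
case: (IH (sh j 1 P)) => //; first by rewrite deg_shj; lia.
move=> e he ->; exists ((deg j P + 1)%:~R * e).
  by rewrite mulf_neq0 // intr_neq0 //; lia.
rewrite sh_comp mulrA.
by have -> : 1 + k%:Z = k.+1%:Z by lia.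
Qed.

Lemma list_max (T : eqType) (f : T -> int) (s : seq T) : s != [::] ->
  exists2 q, q \in s & forall p, p \in s -> f p <= f q.
Proof.
elim: s => // a s IH _.
case: (eqVneq s [::]) => [->|hs].
  by exists a => [|p]; rewrite ?inE // => /eqP ->.
case: (IH hs) => q qs qm.
case: (leP (f a) (f q)) => h.
  exists q; first by rewrite inE qs orbT.
  by move=> p; rewrite inE => /orP [/eqP ->|/qm].
exists a; first by rewrite inE eqxx.
move=> p; rewrite inE => /orP [/eqP ->|/qm h2] //.
by apply: le_trans h2 (ltW h).
Qed.

Lemma ex_max (x : W) (f : I -> int) : x != 0 ->
  exists2 q, x@_q != 0 & forall P, x@_P != 0 -> f P <= f q.
Proof.
move=> hx.
have hs : enum_fset (msupp x) != [::].
  apply: contra hx => /eqP hs; apply/eqP; rewrite [x]monalgE hs big_nil //.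
case: (list_max f hs) => q qs qm.
exists q; first by rewrite mcoeff_neq0.
by move=> P hP; apply: qm; rewrite mcoeff_neq0 in hP.
Qed.

Lemma nz_coef (x : W) : x != 0 -> exists P, x@_P != 0.
Proof. by move=> /(ex_max (fun _ => 0)) [q hq _]; exists q. Qed.

Lemma coef_nz (x : W) P : x@_P != 0 -> x != 0.
Proof. by apply: contra => /eqP ->; rewrite mcoeff0. Qed.

Fixpoint K (j : 'I_N) (d : nat) (S : seq int) (x : W) : W :=
  if S is c :: S' then iter d.+1 (Tc j c) (K j d S' x) else x.

Lemma K_Sup (Q : I -> Prop) j d S x :
  (forall c y, Sup Q y -> Sup Q (Tc j c y)) -> Sup Q x -> Sup Q (K j d S x).
Proof. by move=> HT Hx; elim: S => [|c S IH] //; exact: Sup_iter (HT c) IH. Qed.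

Lemma K_deg j (d : nat) S x : Sup (fun P => deg j P <= d%:Z) x ->
  Sup (fun P => deg j P <= d%:Z) (K j d S x).
Proof. by move=> Hx; apply: K_Sup Hx => c y h; exact: Sup_deg_le. Qed.

Lemma K_top j (d : nat) S x P : Sup (fun P => deg j P <= d%:Z) x -> deg j P = d%:Z ->
  (K j d S x)@_P = (\prod_(c <- S) ((sec j P - c)%:~R)^+d.+1) * x@_P.
Proof.
move=> Hx hd; elim: S => [|c S IH]; first by rewrite big_nil mul1r.
rewrite [K _ _ _ _]/= (top c (K_deg (S := S) Hx) d.+1 hd) IH big_cons mulrA //.
Qed.

Lemma K_kill j (d : nat) S x : Sup (fun P => deg j P <= d%:Z) x -> Sup (fun P => 0 <= deg j P) x ->
  Sup (fun P => sec j P \notin S) (K j d S x).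
Proof.
move=> Hd H0; elim: S => [|c S IH] // P hP.
have hS : sec j P \notin S.
  apply: (Sup_iter (Q := fun P => sec j P \notin S) _ IH hP).
  by move=> y; apply: Sup_T.
rewrite inE negb_or hS andbT; apply/eqP => hc.
have HK0 : Sup (fun P => 0 <= deg j P) (K j d S x).
  by apply: K_Sup H0 => c0 y h; exact: Sup_T0.
have h0 : 0 <= deg j P.
  apply: (Sup_iter (Q := fun P => 0 <= deg j P) _ HK0 hP).
  by move=> y; apply: Sup_T0.
move: hP; change (K j d (c :: S) x) with (iter d.+1 (Tc j c) (K j d S x)).
rewrite (kill (K_deg (S := S) Hd) (k := d.+1) hc) ?eqxx //; lia.
Qed.

Variable J : W -> Prop.
Hypothesis JT : forall j c y, J y -> J (Tc j c y).

Lemma J_iter j c k y : J y -> J (iter k (Tc j c) y).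
Proof. by move=> Jy; elim: k => //= k IH; apply: JT. Qed.

Lemma J_K j d S x : J x -> J (K j d S x).
Proof. by move=> Jx; elim: S => [|c S IH] //; exact: J_iter. Qed.

Lemma Clean j (Q : I -> Prop) x :
  (forall P t, Q (sh j t P) -> Q P) ->
  x != 0 -> J x -> Sup Q x -> Sup (fun P => 0 <= deg j P) x ->
  exists c0 : int, exists2 z, z != 0 &
    J z /\ Sup (fun P => [/\ Q P, deg j P = 0 & sec j P = c0]) z.
Proof.
move=> HQ hx Jx HxQ Hx0.
case: (ex_max (deg j) hx) => q0 hq0 qmax.
have hd0 : 0 <= deg j q0 := Hx0 _ hq0.
pose d := absz (deg j q0).
have hd : deg j q0 = d%:Z by rewrite /d; lia.
pose c0 := sec j q0.
pose S := [seq sec j q | q <- enum_fset (msupp x) & sec j q != c0].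
pose y := K j d S x.
pose z := iter d (Tc j c0) y.
have Hxd : Sup (fun P => deg j P <= d%:Z) x by move=> P /qmax; rewrite hd.
have Hyd : Sup (fun P => deg j P <= d%:Z) y := K_deg Hxd.
have Hy0 : Sup (fun P => 0 <= deg j P) y.
  by apply: K_Sup Hx0 => c y' h; exact: Sup_T0.
have HyS : Sup (fun P => sec j P \notin S) y := K_kill Hxd Hx0.
have Hxin : Sup (fun P => sec j P \in c0 :: S) x.
  move=> P hP; rewrite inE; case: eqP => //= hne.
  apply/mapP; exists P => //; rewrite mem_filter; apply/andP; split; first by apply/eqP.
  by rewrite mcoeff_neq0 in hP.
have Hyin : Sup (fun P => sec j P \in c0 :: S) y.
  by apply: K_Sup Hxin => c y' h; apply: Sup_T h.
have HyQ : Sup Q y.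
  by apply: K_Sup HxQ => c y' h; apply: Sup_T h => P; apply: HQ.
have Hyc : Sup (fun P => sec j P = c0) y.
  move=> P hP; have := Hyin P hP; have := HyS P hP.
  by rewrite inE => /negbTE ->; rewrite orbF => /eqP.
have HzQ : Sup Q z.
  by apply: Sup_iter HyQ => y' h; apply: Sup_T h => P; apply: HQ.
have Hzc : Sup (fun P => sec j P = c0) z.
  by apply: Sup_iter Hyc => y' h; apply: Sup_T h.
have Hz0 : Sup (fun P => 0 <= deg j P) z.
  by apply: Sup_iter Hy0 => y' h; apply: Sup_T0.
exists c0, z; last first.
  split; first by apply: J_iter; apply: J_K.
  move=> P hP; split; [exact: HzQ|idtac|exact: Hzc].
  have h0 := Hz0 P hP; have hc := Hzc P hP.
  case: (leP (deg j P) 0) => h; first by lia.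
  by move: hP; rewrite /z (kill Hyd (k := d) hc) ?eqxx //; lia.
pose P0 := sh j (- deg j q0) q0.
have hP0 : 0 <= deg j P0 by rewrite /P0 deg_shj; lia.
have [e he Ez] := lower y d (P := P0) (erefl _) hP0.
apply: (@coef_nz _ P0); rewrite /z Ez sh_comp.
have -> : - deg j q0 + d%:Z = 0 by lia.
rewrite sh0 /y (K_top _ Hxd hd) mulf_neq0 // mulf_neq0 //.
rewrite prodf_seq_neq0; apply/allP => c hc; rewrite /= expf_neq0 // intr_neq0 // subr_eq0.
by case/mapP: hc => q; rewrite mem_filter => /andP [hq _] ->; rewrite eq_sym.
Qed.

Lemma nz2 (a b u v : F) : a * u + b * v != 0 -> (u != 0) || (v != 0).
Proof.
case: (eqVneq u 0) => [->|] //=; case: (eqVneq v 0) => [->|] //=.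
by rewrite !mulr0 addr0 eqxx.
Qed.

Hypothesis JX : forall j t y, 0 <= t -> J y -> J (Xop j t y).

Lemma Shift j (Q : I -> Prop) x :
  (forall P t, Q (sh j t P) -> Q P) -> x != 0 -> J x -> Sup Q x ->
  exists2 y, y != 0 & [/\ J y, Sup Q y & Sup (fun P => 0 <= deg j P) y].
Proof.
move=> HQ hx Jx HxQ.
case: (ex_max (fun P => - deg j P) hx) => q1 hq1 qmin.
case: (leP 0 (deg j q1)) => hneg.
  by exists x => //; split => // P hP; have := qmin P hP; lia.
pose t := 1 - deg j q1.
have ht : 0 <= t by rewrite /t; lia.
exists (Xop j t x); last first.
  split; first exact: JX.
    move=> P; rewrite coef_X => /nz2 /orP [] /HxQ; exact: HQ.
  move=> P hP; case: (leP 0 (deg j P)) => // hP0; exfalso; move: hP.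
  rewrite coef_X.
  have -> : x@_(sh j (- t) P) = 0.
    case: (eqVneq x@_(sh j (- t) P) 0) => // /qmin; rewrite deg_shj /t; lia.
  have -> : x@_(sh j (1 - t) P) = 0.
    case: (eqVneq x@_(sh j (1 - t) P) 0) => // /qmin; rewrite deg_shj /t; lia.
  by rewrite !mulr0 addr0 eqxx.
pose P0 := sh j (t - 1) q1.
apply: (@coef_nz _ P0); rewrite coef_X /P0 !sh_comp.
have -> : t - 1 + (1 - t) = 0 by lia.
have -> : x@_(sh j (t - 1 + - t) q1) = 0.
  case: (eqVneq x@_(sh j (t - 1 + - t) q1) 0) => // /qmin; rewrite deg_shj; lia.
rewrite mulr0 add0r sh0 mulf_neq0 // intr_neq0 // deg_shj /=.
by case: (q1.2 == j) => /=; rewrite /t; lia.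
Qed.

Lemma Reduce x : x != 0 -> J x -> exists g : 'I_N -> int, exists2 z, z != 0 &
  J z /\ Sup (fun P => forall i, deg i P = 0 /\ sec i P = g i) z.
Proof.
move=> hx Jx.
have H : forall k, (k <= N)%N -> exists g : 'I_N -> int, exists2 z, z != 0 &
   J z /\ Sup (fun P => forall i : 'I_N, (i < k)%N -> deg i P = 0 /\ sec i P = g i) z.
  elim=> [_|k IH hk].
    by exists (fun _ => 0), x => //; split => // P _ i; rewrite ltn0.
  case: (IH (ltnW hk)) => g [z hz [Jz Hz]].
  pose j : 'I_N := Ordinal hk.
  pose Q P := forall i : 'I_N, (i < k)%N -> deg i P = 0 /\ sec i P = g i.
  have HQ : forall P t, Q (sh j t P) -> Q P.
    move=> P t h i hi; have hij : i != j by apply/eqP => e; move: hi; rewrite e /= ltnn.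
    by rewrite -(deg_shi t P hij); apply: h.
  case: (Shift HQ hz Jz Hz) => y hy [Jy HyQ Hy0].
  case: (Clean HQ hy Jy HyQ Hy0) => c0 [w hw [Jw Hw]].
  exists (fun i => if i == j then c0 else g i), w => //; split => // P hP i hi.
  case: (Hw P hP) => HQP hd hs.
  case: (eqVneq i j) => [->|hij]; first by split.
  apply: HQP.
  move: hi hij; rewrite ltnS leq_eqVlt => /orP [/eqP e|//].
  by rewrite -(inj_eq val_inj) /= e eqxx.
case: (H N (leqnn _)) => g [z hz [Jz Hz]]; exists g, z => //; split => // P hP i.
exact: Hz P hP i (ltn_ord i).
Qed.

End Clean.

Definition PT (n m : nat) (T : pred 'I_(n + m)) : pred (Widx n m) :=
  fun p => [forall k, T k ==> (0 <= p.1.2 k)].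

Section Final.
Variables (F : fieldType) (n m : nat).
Hypothesis charF0 : [pchar F]%R =i pred0.
Local Notation W := (Walg F n m).
Local Notation I := (Widx n m).
Local Notation N := (n + m)%N.
Local Notation e0n := (@e0n n).
Local Notation e0 := (@e0 n m).
Local Notation sh := (@sh n m).
Local Notation deg := (@deg n m).
Local Notation sec := (@sec n m).
Local Notation bas := (@bas F n m).
Local Notation Sup := (@Sup F n m).
Local Notation ev := (@ev n m).
Local Notation shv := (@shv n m).
Variable T : pred 'I_N.
Local Notation PT := (@PT n m T).

Definition negv (g : {ffun 'I_n -> int}) : {ffun 'I_n -> int} := [ffun t => - g t].

Lemma acoef_neg g (i : 'I_N) : acoef (negv g) i = - acoef g i.
Proof. by rewrite /acoef; case: insub => [k|]; rewrite ?ffunE ?oppr0. Qed.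

Lemma addv_neg g : addv (negv g) g = e0n.
Proof. by apply/ffunP => t; rewrite !ffunE addNr. Qed.

Lemma acoef_lshift g (t : 'I_n) : acoef g (lshift m t) = g t.
Proof.
rewrite /acoef insubT /=; first by rewrite ltn_ord.
by move=> h; congr (g _); apply: val_inj.
Qed.

Lemma Sup_single (v : W) a : Sup (fun P => P = a) v -> v = v@_a *: bas a.
Proof.
move=> Hv; apply/malgP => P; rewrite mcoeffZW coef_bas.
case: (eqVneq a P) => [->|h]; first by rewrite mulr1.
rewrite mulr0; case: (eqVneq v@_P 0) => // /Hv e.
by move: h; rewrite e eqxx.
Qed.

Lemma PT_nn (p : I) : (forall k, 0 <= p.1.2 k) -> PT p.
Proof. by move=> h; apply/forallP => k; rewrite h implybT. Qed.

Variable J : W -> Prop.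
Hypothesis JD : forall x y, J x -> J y -> J (x + y).
Hypothesis JZ : forall (c : F) x, J x -> J (c *: x).
Hypothesis JB : forall p y, PT p -> J y -> J (Wbr (bas p) y).

Lemma J_sub x y : J x -> J y -> J (x - y).
Proof. by move=> hx hy; rewrite -scaleN1r; apply: JD => //; apply: JZ. Qed.

Lemma J_bas_single (v : W) a : J v -> Sup (fun P => P = a) v -> v@_a != 0 -> J (bas a).
Proof.
move=> Jv Hv ha.
have -> : bas a = (v@_a)^-1 *: v by rewrite {2}(Sup_single Hv) scalerA mulVf ?scale1r.
exact: JZ.
Qed.

Lemma JTd j c y : J y -> J (Tc j c y).
Proof.
move=> Jy; apply: J_sub; last exact: JZ.
by apply: JB => //; apply: PT_nn => k; rewrite /= e0E.
Qed.

Lemma JXd j t y : 0 <= t -> J y -> J (Xop j t y).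
Proof.
move=> ht Jy; apply: JB => //; apply: PT_nn => k; rewrite /= ffunE.
by case: (k == j); rewrite ?mul1r ?mul0r.
Qed.

Lemma A4 w : w != 0 -> J w -> Sup (fun P => P.1 = (e0n, e0)) w ->
  exists k, J (bas (e0n, e0, k)).
Proof.
move=> hw Jw Hw.
case: (nz_coef hw) => -[[g d] k] hP.
have [eg ed] : g = e0n /\ d = e0 by case: (Hw _ hP) => -> ->.
subst g d.
exists k; apply: (@J_bas_single (Xop k 1 w)).
- by apply: JXd.
- move=> [[g' d'] k'] h2; move: h2; rewrite coef_X.
  have -> : (sec k (g', d', k'))%:~R * w@_(sh k (-1) (g', d', k')) = 0.
    case: (eqVneq w@_(sh k (-1) (g', d', k')) 0) => [->|h]; first by rewrite mulr0.
    by case: (Hw _ h) => /= -> _; rewrite /sec /= acoef0 mulr0z mul0r.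
  rewrite add0r subrr sh0 addr0 mulr1 => h2.
  case: (eqVneq w@_(g', d', k') 0) => [e|hne]; first by move: h2; rewrite e mulr0 eqxx.
  have [eg ed] : g' = e0n /\ d' = e0 by case: (Hw _ hne) => -> ->.
  subst g' d'.
  case: (eqVneq k' k) => [->//|hk].
  by move: h2; rewrite /deg /= e0E (negbTE hk) /= subr0 mulr0z mul0r eqxx.
- rewrite coef_X /sec /= acoef0 mulr0z mul0r add0r subrr sh0 addr0 mulr1.
  by rewrite /deg /= e0E eqxx add0r mulf_neq0 // intr_neq0.
Qed.

Lemma A3 z (gv : {ffun 'I_n -> int}) : z != 0 -> J z -> Sup (fun P => P.1 = (gv, e0)) z ->
  exists2 w, w != 0 & J w /\ Sup (fun P => P.1 = (e0n, e0)) w.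
Proof.
move=> hz Jz Hz.
case: (eqVneq gv e0n) => [eg|hg]; first by exists z => //; split => // P /Hz; rewrite eg.
have [t0 ht0] : exists t0, gv t0 != 0.
  case: (boolP [exists t, gv t != 0]) => [/existsP //|/existsPn h].
  by case/eqP: hg; apply/ffunP => t; rewrite ffunE; move: (h t); rewrite negbK => /eqP.
pose i := lshift m t0.
pose ai := acoef gv i.
have hai : ai != 0 by rewrite /ai acoef_lshift.
pose p : I := (negv gv, e0, i).
pose w := Wbr (bas p) z.
have Jw : J w by apply: JB => //; apply: PT_nn => k; rewrite /= e0E.
have Hc : forall q P, z@_q != 0 -> (Wbr_basis F p q)@_P =
   (if (e0n, e0, q.2) == P then ai%:~R else 0)
   + (if (e0n, e0, i) == P then (acoef gv q.2)%:~R else 0).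
  move=> [[g d] k] P /Hz [-> ->].
  rewrite /p Wbr_basisE coef4 addv_neg addv0 !e0E mulr0z !if_same !subr0 acoef_neg mulrNz.
  by rewrite addr0 /=; case: (_ == P); case: (_ == P); rewrite ?opprK ?subr0 ?addr0 ?sub0r ?add0r.
have Ew : forall P, w@_P = \sum_(q <- enum_fset (msupp z)) z@_q * (Wbr_basis F p q)@_P.
  by move=> P; rewrite /w Wbr_U mcoeff_sum; apply: eq_bigr => q _; rewrite mcoeffZW.
exists w; last first.
  split => // P hP; case: (eqVneq P.1 (e0n, e0)) => // hne; exfalso; move: hP.
  rewrite Ew big1_seq ?eqxx // => q /andP [_ hq].
  have hq' : z@_q != 0 by rewrite mcoeff_neq0.
  rewrite Hc //.
  case: eqP => [e|_]; first by move: hne; rewrite -e /= eqxx.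
  case: eqP => [e|_]; first by move: hne; rewrite -e /= eqxx.
  by rewrite addr0 mulr0.
case: (boolP [exists k', (k' != i) && (z@_(gv, e0, k') != 0)]) =>
  [/existsP [k' /andP [hk' hzk]]|/existsPn hB].
  apply: (coef_nz (P := (e0n, e0, k'))); rewrite Ew.
  have -> : \sum_(q <- enum_fset (msupp z)) z@_q * (Wbr_basis F p q)@_(e0n, e0, k')
      = \sum_(q <- enum_fset (msupp z)) (if q == (gv, e0, k') then z@_q * ai%:~R else 0).
    apply: eq_big_seq => q hq; have hq' : z@_q != 0 by rewrite mcoeff_neq0.
    rewrite Hc //; move: hq'; clear hq; case: q => [[g d] k] hq'.
    have [eg ed] : g = gv /\ d = e0 by case: (Hz _ hq') => -> ->.
    subst g d; rewrite /= !xpair_eqE !eqxx /= [i == k']eq_sym (negbTE hk') addr0.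
    by case: eqP; rewrite ?mulr0.
  by rewrite sum_pick1 mulf_neq0 // intr_neq0.
pose a : I := (gv, e0, i).
have hza : z@_a != 0.
  case: (nz_coef hz) => -[[g d] k] hP0.
  have [eg ed] : g = gv /\ d = e0 by case: (Hz _ hP0) => -> ->.
  subst g d; case: (eqVneq k i) => [e|hk]; first by rewrite /a -e.
  by move: (hB k); rewrite hk hP0.
apply: (coef_nz (P := (e0n, e0, i))); rewrite Ew.
have -> : \sum_(q <- enum_fset (msupp z)) z@_q * (Wbr_basis F p q)@_(e0n, e0, i)
    = \sum_(q <- enum_fset (msupp z)) (if q == a then z@_q * (ai + ai)%:~R else 0).
  apply: eq_big_seq => q hq; have hq' : z@_q != 0 by rewrite mcoeff_neq0.
  rewrite Hc //; move: hq'; clear hq; case: q => [[g d] k] hq'.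
  have [eg ed] : g = gv /\ d = e0 by case: (Hz _ hq') => -> ->.
  subst g d.
  have hk : k = i by apply/eqP; move: (hB k); rewrite hq' andbT negbK.
  by subst k; rewrite !eqxx intrD.
rewrite sum_pick1 mulf_neq0 // intr_neq0 //; lia.
Qed.

Lemma J_step1 (v : W) a (c : F) : J v -> (forall P, v@_P = if a == P then c else 0) ->
  c != 0 -> J (bas a).
Proof.
move=> Jv E hc; apply: (J_bas_single Jv); last by rewrite E eqxx.
by move=> P; rewrite E; case: (eqVneq a P) => [->//|_]; rewrite eqxx.
Qed.

Lemma J_step2 (v : W) a b (c d : F) : J v -> J (bas b) ->
  (forall P, v@_P = (if a == P then c else 0) + (if b == P then d else 0)) ->
  a != b -> c != 0 -> J (bas a).
Proof.
move=> Jv Jb E hab hc; apply: (@J_step1 (v - d *: bas b) a c) => //.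
  by apply: J_sub => //; apply: JZ.
move=> P; rewrite mcoeffB mcoeffZW coef_bas E.
case: (eqVneq b P) => [<-|hb]; first by rewrite (negbTE hab) mulr1 addrK.
by rewrite mulr0 subr0 addr0.
Qed.

Lemma addv0r (v : {ffun 'I_n -> int}) : addv v e0n = v.
Proof. by apply/ffunP => t; rewrite !ffunE addr0. Qed.
Lemma addv0r' (v : {ffun 'I_N -> int}) : addv v e0 = v.
Proof. by apply/ffunP => t; rewrite !ffunE addr0. Qed.
Lemma addv_ev (v : {ffun 'I_N -> int}) j t : addv v (ev j t) = shv j t v.
Proof. by apply/ffunP => i; rewrite !ffunE. Qed.
Lemma ev_shv j t : ev j t = shv j t e0.
Proof. by apply/ffunP => i; rewrite !ffunE add0r. Qed.
Lemma shv_back (v : {ffun 'I_N -> int}) j : shv j (-1) (shv j 1 v) = v.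
Proof. by rewrite shv_comp addrN shv0. Qed.
Lemma shvE (v : {ffun 'I_N -> int}) j t : shv j t v j = v j + t.
Proof. by rewrite ffunE eqxx mul1r. Qed.
Lemma evE j t : ev j t j = t.
Proof. by rewrite ffunE eqxx mul1r. Qed.

Lemma coef_R1 (a : {ffun 'I_n -> int}) b k P :
  (Wbr (bas (a, b, k)) (bas (e0n, e0, k)))@_P =
    (if (a, b, k) == P then - (acoef a k)%:~R else 0)
  + (if (a, shv k (-1) b, k) == P then - (b k)%:~R else 0).
Proof.
rewrite Wbr_UU Wbr_basisE coef4 addv0r addv0r' acoef0 !e0E mulr0z !if_same subepsE.
by rewrite add0r sub0r; case: ifP; case: ifP; rewrite ?oppr0 ?subr0 ?sub0r ?opprD.
Qed.

Lemma coef_R2 (a : {ffun 'I_n -> int}) b k P :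
  (Wbr (bas (a, b, k)) (bas (e0n, ev k 1, k)))@_P =
    (if (a, b, k) == P then (1 - b k)%:~R else 0)
  + (if (a, shv k 1 b, k) == P then - (acoef a k)%:~R else 0).
Proof.
rewrite Wbr_UU Wbr_basisE coef4 addv0r addv_ev acoef0 mulr0z !if_same subepsE shv_back evE.
rewrite add0r; case: ifP; case: ifP; rewrite ?intrB ?subr0 ?sub0r ?oppr0 ?addr0 ?add0r //.
by move=> _ _; rewrite addrAC.
Qed.

Lemma coef_B0 k0 k P :
  (Wbr (bas (e0n, ev k0 1, k)) (bas (e0n, e0, k0)))@_P = if (e0n, e0, k) == P then -1 else 0.
Proof.
rewrite Wbr_UU Wbr_basisE coef4 addv0n addvev !acoef0 !e0E mulr0z !if_same subepsE shv_back evE.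
by rewrite !subr0 add0r sub0r; case: ifP; rewrite ?oppr0.
Qed.

Lemma coef_B1 k P :
  (Wbr (bas (e0n, ev k 2, k)) (bas (e0n, e0, k)))@_P = if (e0n, ev k 1, k) == P then -2 else 0.
Proof.
rewrite Wbr_UU Wbr_basisE coef4 addv0n addvev !acoef0 !e0E mulr0z !if_same subepsE shv_comp evE.
have -> : (2 + -1 : int) = 1 by [].
by rewrite -ev_shv !subr0 add0r sub0r; case: ifP; rewrite ?oppr0.
Qed.

Lemma PT_up (a : {ffun 'I_n -> int}) b k k' : PT (a, b, k) -> PT (a, shv k 1 b, k').
Proof.
move=> /forallP h; apply/forallP => i; move: (h i); rewrite /= ffunE.
by case: (T i) => //=; case: (i == k) => /=; lia.
Qed.

Lemma PT_down (a : {ffun 'I_n -> int}) b k : PT (a, b, k) -> 0 < b k -> PT (a, shv k (-1) b, k).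
Proof.
move=> /forallP h hb; apply/forallP => i; move: (h i); rewrite /= ffunE.
case: (T i) => //=; case: (eqVneq i k) => [->|] /=; lia.
Qed.

Lemma pos_neq (a : {ffun 'I_n -> int}) b k (t : int) : t != 0 -> (a, b, k) != (a, shv k t b, k) :> I.
Proof.
move=> ht; apply/eqP => -[] /(congr1 (fun v : {ffun 'I_N -> int} => v k)).
by rewrite shvE; lia.
Qed.

Lemma two_neq0 : (2 : F) != 0.
Proof. by have := (pcharf0P F).1 charF0 2; rewrite /= => ->. Qed.

Lemma StepB k0 : J (bas (e0n, e0, k0)) -> forall p, PT p -> J (bas p).
Proof.
move=> J0.
have Jd : forall k, J (bas (e0n, e0, k)).
  move=> k; apply: (@J_step1 _ _ (-1) _ (coef_B0 k0 k)); last by rewrite oppr_eq0 oner_eq0.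
  apply: JB J0; apply: PT_nn => i; rewrite /= ffunE; case: (i == k0); rewrite ?mul1r ?mul0r //.
have Jx : forall k, J (bas (e0n, ev k 1, k)).
  move=> k; apply: (@J_step1 _ _ (-2) _ (coef_B1 k)); last by rewrite oppr_eq0 two_neq0.
  apply: JB (Jd k); apply: PT_nn => i; rewrite /= ffunE; case: (i == k); rewrite ?mul1r ?mul0r //.
move=> [[a b] k] hp.
suff H : forall Nn (b : {ffun 'I_N -> int}), (absz (b k) < Nn)%N -> PT (a, b, k) -> J (bas (a, b, k)).
  by apply: (H (absz (b k)).+1).
clear hp b.
elim.
  by move=> b hlt; exfalso; rewrite ltn0 in hlt.
move=> Nn IH b hlt hp.
have R1 := JB hp (Jd k).
have R2 := JB hp (Jx k).
case: (ltgtP (b k) 0) => hb.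
-
  apply: (J_step2 R2 _ (coef_R2 a b k)).
  + apply: IH; last exact: PT_up. by rewrite shvE; lia.
  + by apply: pos_neq.
  + by apply: (intr_neq0 charF0); lia.
-
  case: (eqVneq (acoef a k) 0) => ha.
    have R1' : J (Wbr (bas (a, shv k 1 b, k)) (bas (e0n, e0, k))).
      by apply: JB (Jd k); exact: PT_up.
    apply: (@J_step1 _ _ (- (b k + 1)%:~R) R1').
      by move=> P; rewrite coef_R1 ha mulr0z oppr0 if_same add0r shv_back shvE.
    by rewrite oppr_eq0 (intr_neq0 charF0) //; lia.
  apply: (J_step2 R1 _ (coef_R1 a b k)).
  + apply: IH; last exact: PT_down. by rewrite shvE; lia.
  + by apply: pos_neq.
  + by rewrite oppr_eq0 (intr_neq0 charF0).
-
  case: (eqVneq (acoef a k) 0) => ha.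
    apply: (@J_step1 _ _ (1 - b k)%:~R R2).
      by move=> P; rewrite coef_R2 ha mulr0z oppr0 if_same addr0.
    by rewrite hb (intr_neq0 charF0).
  apply: (@J_step1 _ _ (- (acoef a k)%:~R) R1).
    by move=> P; rewrite coef_R1 hb mulr0z oppr0 if_same addr0.
  by rewrite oppr_eq0 (intr_neq0 charF0).
Qed.

End Final.


Section Main.
Variables (F : fieldType) (n m : nat).
Hypothesis charF0 : [pchar F]%R =i pred0.
Hypothesis Hnm : (0 < n + m)%N.
Local Notation W := (Walg F n m).
Local Notation I := (Widx n m).
Local Notation N := (n + m)%N.
Local Notation e0n := (@e0n n).
Local Notation e0 := (@e0 n m).
Local Notation bas := (@bas F n m).
Local Notation Sup := (@Sup F n m).
Local Notation ev := (@ev n m).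
Variable T : pred 'I_N.
Local Notation PT := (@PT n m T).

Lemma Wsub_Sup (Q : pred I) (f : W) : Wsub Q f <-> Sup Q f.
Proof.
split => h p hp; first by apply: h; rewrite -mcoeff_neq0.
by apply: h; rewrite mcoeff_neq0.
Qed.

Lemma Sup0 (Q : I -> Prop) : Sup Q 0.
Proof. by move=> P; rewrite mcoeff0 eqxx. Qed.

Lemma Sup_add (Q : I -> Prop) (x y : W) : Sup Q x -> Sup Q y -> Sup Q (x + y).
Proof.
move=> hx hy P; rewrite mcoeffD.
case: (eqVneq x@_P 0) => [->|/hx //]; rewrite add0r; exact: hy.
Qed.

Lemma Sup_opp (Q : I -> Prop) (x : W) : Sup Q x -> Sup Q (- x).
Proof. by move=> hx P; rewrite mcoeffN oppr_eq0; apply: hx. Qed.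

Lemma Sup_scale (Q : I -> Prop) (c : F) (x : W) : Sup Q x -> Sup Q (c *: x).
Proof.
move=> hx P; rewrite mcoeffZW; case: (eqVneq x@_P 0) => [->|/hx //].
by rewrite mulr0 eqxx.
Qed.

Lemma Sup_cbas (Q : I -> Prop) (c : F) p : (c != 0 -> Q p) -> Sup Q (c *: bas p).
Proof.
move=> h P; rewrite mcoeffZW coef_bas; case: (eqVneq p P) => [<-|_].
  by rewrite mulr1; apply: h.
by rewrite mulr0 eqxx.
Qed.

Lemma Sup_sum (Q : I -> Prop) (s : seq I) (f : I -> W) :
  (forall i, i \in s -> Sup Q (f i)) -> Sup Q (\sum_(i <- s) f i).
Proof.
elim: s => [|a s IH] h; first by rewrite big_nil; apply: Sup0.
rewrite big_cons; apply: Sup_add; first by apply: h; rewrite inE eqxx.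
by apply: IH => i hi; apply: h; rewrite inE hi orbT.
Qed.

Lemma intr_eq0' (z : int) : z = 0 -> (z%:~R : F) = 0.
Proof. by move=> ->. Qed.

Lemma Sup_basis p q : PT p -> PT q -> Sup PT (Wbr_basis F p q).
Proof.
case: p => [[a b] i]; case: q => [[g d] k] /forallP hp /forallP hq.
rewrite Wbr_basisE.
apply: Sup_add; [apply: Sup_add; [apply: Sup_add|apply: Sup_opp]|apply: Sup_opp];
  apply: Sup_cbas => hc; apply/forallP => k'; rewrite /= ?ffunE;
  move: (hp k') (hq k'); rewrite /=.
- by case: (T k') => //=; lia.
- have hd : d i != 0 by apply: contra hc => /eqP ->; rewrite mulr0z.
  move: (hq i); rewrite /=.
  by case: (eqVneq k' i) => [->|_] /=; case: (T _) => //=; lia.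
- by case: (T k') => //=; lia.
- have hd : b k != 0 by apply: contra hc => /eqP ->; rewrite mulr0z.
  move: (hp k); rewrite /=.
  by case: (eqVneq k' k) => [->|_] /=; case: (T _) => //=; lia.
Qed.

Lemma closure (x y : W) : Wsub PT x -> Wsub PT y -> Wsub PT (Wbr x y).
Proof.
move=> /Wsub_Sup hx /Wsub_Sup hy; apply/Wsub_Sup.
rewrite /Wbr; apply: Sup_sum => p hp; apply: Sup_sum => q hq.
apply: Sup_scale; apply: Sup_basis.
  by apply: hx; rewrite mcoeff_neq0.
by apply: hy; rewrite mcoeff_neq0.
Qed.

Lemma Sup_bas p : PT p -> Sup PT (bas p).
Proof. by move=> hp P; rewrite coef_bas; case: (eqVneq p P) => [<-//|_] /=; rewrite mulr0n eqxx. Qed.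

Lemma nonab : exists x y : W, [/\ Wsub PT x, Wsub PT y & Wbr x y != 0].
Proof.
pose j0 : 'I_N := Ordinal Hnm.
have hnn : forall v : {ffun 'I_N -> int}, (forall k, 0 <= v k) -> forall a k, PT (a, v, k).
  by move=> v hv a k; apply: PT_nn.
exists (bas (e0n, e0, j0)), (bas (e0n, ev j0 1, j0)); split.
- by apply/Wsub_Sup; apply: Sup_bas; apply: hnn => k; rewrite e0E.
- apply/Wsub_Sup; apply: Sup_bas; apply: hnn => k; rewrite /= ffunE.
  by case: (k == j0); rewrite ?mul1r ?mul0r.
apply: (coef_nz (P := (e0n, e0, j0))).
rewrite Wbr_UU Wbr_basisE coef4 addv0n addv0 !acoef0 !e0E mulr0z !if_same subepsE.
by rewrite evE ev_shv shv_back eqxx subr0 add0r !subr0 oner_eq0.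
Qed.

Lemma ideal_part (J : W -> Prop) : Wideal PT J ->
  (forall x, J x <-> x = 0) \/ (forall x, J x <-> Wsub PT x).
Proof.
case => JL J0 JD JZ JBr.
have JB : forall p y, PT p -> J y -> J (Wbr (bas p) y).
  move=> p y hp Jy; apply: JBr Jy; apply/Wsub_Sup; exact: Sup_bas.
case: (classic (exists x, J x /\ x != 0)) => [[x [Jx hx]]|hno]; last first.
  left => f; split => [Jf|->]; last exact: J0.
  case: (eqVneq f 0) => [//|hf]; exfalso; apply: hno; exists f; split; [exact: Jf|exact: hf].
right => f; split; first exact: JL.
move=> /Wsub_Sup hf.
have [g [z hz [Jz Hz]]] := Reduce charF0 (JTd JD JZ JB) (JXd JB) hx Jx.
pose gv : {ffun 'I_n -> int} := [ffun t => g (lshift m t)].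
have Hz' : Sup (fun P => P.1 = (gv, e0)) z.
  move=> [[a b] k] hP; have H := Hz _ hP; rewrite /=; congr pair; apply/ffunP => t; rewrite !ffunE.
    by case: (H (lshift m t)) => _; rewrite /sec /= acoef_lshift.
  by case: (H t).
have [w hw [Jw Hw]] := A3 charF0 JB hz Jz Hz'.
have [k0 J0'] := A4 charF0 JZ JB hw Jw Hw.
have Jall := StepB charF0 JD JZ JB J0'.
have Ht : forall p, p \in enum_fset (msupp f) -> J << f@_p *g p >>.
  move=> p hp.
  have -> : (<< f@_p *g p >> : W) = f@_p *: bas p.
    by apply/malgP => P; rewrite mcoeffU mcoeffZW coef_bas mulr_natr.
  apply: JZ; apply: Jall; apply: hf; by rewrite mcoeff_neq0.
rewrite [f]monalgE.
elim: (enum_fset (msupp f)) Ht => [|a s IH] Ht; first by rewrite big_nil; exact: J0.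
rewrite big_cons; apply: JD; first by apply: Ht; rewrite inE eqxx.
by apply: IH => p hp; apply: Ht; rewrite inE hp orbT.
Qed.

Lemma Wsimple_PT : @Wsimple F n m PT.
Proof. split; [exact: closure|exact: nonab|exact: ideal_part]. Qed.

End Main.

Lemma Wsimple_ext (F : fieldType) (n m : nat) (P Q : pred (Widx n m)) :
  (forall p, P p = Q p) -> @Wsimple F n m P -> @Wsimple F n m Q.
Proof.
move=> E [H1 H2 H3].
have EW : forall f : Walg F n m, Wsub P f <-> Wsub Q f.
  by move=> f; split => h p hp; [rewrite -E|rewrite E]; apply: h.
split.
- move=> x y hx hy; apply/EW; apply: H1; apply/EW; assumption.
- case: H2 => x [y [hx hy hn]]; exists x, y; split; [apply/EW|apply/EW|]; assumption.
- move=> J [JL J0 JD JZ JB].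
  have hJ : Wideal P J.
    split; [|exact: J0|exact: JD|exact: JZ|].
      by move=> x hx; apply/EW; exact: JL x hx.
    by move=> x y hx hy; apply: JB hy; apply/EW.
  case: (H3 J hJ) => h; [left|right] => x; first exact: h.
  rewrite h; exact: EW.
Qed.

Theorem theorem1 (F : fieldType) (charF0 : [pchar F]%R =i pred0)
  (n m r s : nat) (Hnm : (0 < n + m)%N) (Hr : (r <= n)%N) (Hs : (s <= m)%N) :
  [/\ @Wsimple F n m (@Pfull n m), @Wsimple F n m (@Prs n m r s) & @Wsimple F n m (@Pstar n m)].
Proof.
split.
- apply: (@Wsimple_ext F n m (PT pred0)); last exact: (Wsimple_PT charF0 Hnm).
  by move=> p; rewrite /Pfull; apply/forallP.
- apply: (@Wsimple_ext F n m (PT (fun k : 'I_(n + m) => ((r <= k < n) || (n + s <= k))%N)));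
    last exact: (Wsimple_PT charF0 Hnm).
  by [].
- apply: (@Wsimple_ext F n m (PT predT)); last exact: (Wsimple_PT charF0 Hnm).
  by move=> p; apply: eq_forallb.
Qed.
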